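(* Let $n\ge 3$, let $C_n$ be the cycle on $n$ vertices, and let $v\in V(C_n)$. Then $$TDV(v)=\begin{cases}2 & \text{if } n\equiv 0 \pmod 4,\\ \left\lfloor \frac n2\right\rfloor+1 & \text{if } n\equiv 1,3 \pmod 4,\\ \frac n2\cdot\frac{n+2}{4} & \text{if } n\equiv 2 \pmod 4.\end{cases}$$
   Context: A set $D \subseteq V(G)$ is a total dominating set of a graph $G$ if every vertex of $G$ has a neighbor in $D$. $\gamma_t(G)$ is the minimum cardinality of a total dominating set; a minimum one is a $\gamma_t(G)$-set. $TDV(v)$ is the number of $\gamma_t(C_n)$-sets containing $v$. *)

(* Defs.v *)
From mathcomp Require Import all_boot.
Set Implicit Arguments. Unset Strict Implicit. Unset Printing Implicit Defensive.

Definition cycle_adj (n : nat) (x y : 'I_n) : bool :=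
  (val y == (val x).+1 %% n) || (val x == (val y).+1 %% n).

Definition total_dom (n : nat) (D : {set 'I_n}) : bool :=
  [forall x : 'I_n, [exists y : 'I_n, (y \in D) && cycle_adj x y]].

Definition gamma_t_set (n : nat) (D : {set 'I_n}) : bool :=
  total_dom D && [forall D' : {set 'I_n}, total_dom D' ==> (#|D| <= #|D'|)].

Definition TDV (n : nat) (v : 'I_n) : nat :=
  #|[set D : {set 'I_n} | gamma_t_set D && (v \in D)]|.

(* Main.v *)
Require Import Defs.
From mathcomp Require Import all_boot zify.
Set Implicit Arguments. Unset Strict Implicit. Unset Printing Implicit Defensive.

Lemma per_mul (m : nat) (h : nat -> bool) : (forall j, h (j + m) = h j) ->
  forall x k, h (x + k * m) = h x.
Proof.
move=> hp x; elim=> [|k IH]; first by rewrite mul0n addn0.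
by rewrite mulSn (_ : x + (m + k * m) = (x + k * m) + m) ?hp // ; lia.
Qed.

Lemma per_mod (m : nat) (h : nat -> bool) : (forall j, h (j + m) = h j) ->
  forall x, h (x %% m) = h x.
Proof. by move=> hp x; rewrite {2}(divn_eq x m) addnC per_mul. Qed.

Lemma per_eq (m : nat) (h : nat -> bool) : (forall j, h (j + m) = h j) ->
  forall a b, a = b %[mod m] -> h a = h b.
Proof. by move=> hp a b E; rewrite -(per_mod hp a) E per_mod. Qed.

Lemma sum_shift1 (N : nat) (f : nat -> nat) : f N = f 0 ->
  \sum_(i < N) f i.+1 = \sum_(i < N) f i.
Proof.
move=> H.
have E1 : \sum_(0 <= i < N.+1) f i = f 0 + \sum_(0 <= i < N) f i.+1 by rewrite big_nat_recl.
have E2 : \sum_(0 <= i < N.+1) f i = \sum_(0 <= i < N) f i + f N by rewrite big_nat_recr.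
rewrite !big_mkord in E1 E2; move: E1 E2; rewrite H; lia.
Qed.

Lemma sum_shift (N c : nat) (f : nat -> nat) : (forall i, f (i + N) = f i) ->
  \sum_(i < N) f (i + c) = \sum_(i < N) f i.
Proof.
move=> hp; elim: c => [|c IH].
  by apply eq_bigr => i _; rewrite addn0.
rewrite -IH -(sum_shift1 (f := fun i => f (i + c))).
  by apply eq_bigr => i _; rewrite addnS.
by rewrite /= add0n addnC hp.
Qed.

Lemma sum_split2 (m : nat) (f : nat -> nat) :
  \sum_(k < 2 * m) f k = \sum_(j < m) f (2 * j) + \sum_(j < m) f (2 * j + 1).
Proof.
elim: m => [|m IH]; first by rewrite !big_ord0.
rewrite (_ : 2 * m.+1 = (2 * m).+2); last by lia.
rewrite !big_ord_recr /= IH.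
rewrite (_ : (2 * m).+1 = 2 * m + 1); last by lia.
by rewrite -addnA addnACA.
Qed.

Lemma card_set_sum (T : finType) (P : pred T) :
  #|[set x | P x]| = \sum_(x : T) (P x : nat).
Proof.
rewrite -sum1_card big_mkcond /=; apply eq_bigr => x _; rewrite inE; by case: (P x).
Qed.

Lemma sum_even (M : nat) : \sum_(i < M) (~~ odd i : nat) = (M + 1) %/ 2.
Proof.
elim: M => [|M IH]; first by rewrite big_ord0.
rewrite big_ord_recr /= IH; have := modn2 M; case: (odd M) => /= h; lia.
Qed.

Lemma sum_R0 (M : nat) : \sum_(i < M) (i %% 4 < 2 : nat) = 2 * (M %/ 4) + minn (M %% 4) 2.
Proof.
elim: M => [|M IH]; first by rewrite big_ord0.
rewrite big_ord_recr /= IH; case: ltnP => /= h; lia.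
Qed.

Section Cover.
Variables (m : nat) (h : nat -> bool).
Hypothesis hp : forall j, h (j + m) = h j.
Hypothesis hc : forall j, h j || h j.+1.

Lemma cover_sum : (\sum_(j < m) h j) * 2 = m + \sum_(j < m) (h j && h j.+1 : nat).
Proof.
have E1 : \sum_(j < m) (h j + h j.+1 : nat) = \sum_(j < m) (1 + (h j && h j.+1) : nat).
  apply eq_bigr => j _; have := hc j; by case: (h j); case: (h j.+1).
rewrite big_split /= in E1; rewrite big_split /= in E1.
have E2 : \sum_(j < m) (h j.+1 : nat) = \sum_(j < m) (h j : nat).
  rewrite -(sum_shift 1 (f := fun j => (h j : nat))); last by move=> i; rewrite hp.
  by apply eq_bigr => j _; rewrite addn1.
rewrite E2 sum_nat_const card_ord muln1 in E1; rewrite muln2 -addnn; exact: E1.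
Qed.

Lemma prop_chain (j0 : nat) : j0 < m -> h j0 && h j0.+1 ->
  (forall j, j < m -> j != j0 -> ~~ (h j && h j.+1)) ->
  forall i, i < m -> h (j0.+1 + i) = ~~ odd i.
Proof.
move=> lt0 d0 nd; elim=> [|i IH] lti.
  by rewrite addn0; case/andP: d0.
have mgt : 0 < m by lia.
set j := j0.+1 + i.
have hj : h (j %% m) = h j by apply per_mod.
have hj1 : h (j %% m).+1 = h j.+1.
  apply (per_eq hp); by rewrite -addn1 modnDml addn1.
have ndj : ~~ (h j && h j.+1).
  rewrite -hj -hj1; apply nd; first by apply ltn_pmod.
  apply/eqP => E.
  have : j0 + i.+1 == j0 + 0 %[mod m].
    by rewrite addn0 -addSnnS -/j E (modn_small lt0).
  rewrite eqn_modDl mod0n modn_small //; lia.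
have Hj : h j = ~~ odd i by apply: IH; lia.
rewrite addnS -/j /=; have := hc j; move: ndj; rewrite Hj.
by case: (h j.+1); case: (odd i).
Qed.

Lemma chain_formula (j0 : nat) : j0 < m ->
  (forall i, i < m -> h (j0.+1 + i) = ~~ odd i) ->
  forall y, h y = ~~ odd ((y + (m - j0.+1)) %% m).
Proof.
move=> lt0 hpr y.
have mgt : 0 < m by lia.
rewrite -hpr; last by apply ltn_pmod.
apply (per_eq hp); rewrite modnDmr.
rewrite (_ : j0.+1 + (y + (m - j0.+1)) = y + m); last by lia.
by rewrite modnDr.
Qed.

Lemma shift_inj_dbl (j0 : nat) : h j0 && h j0.+1 ->
  (forall j, h j && h j.+1 -> j %% m = j0) ->
  forall a b, a < m -> b < m -> (forall j, h (j + a) = h (j + b)) -> a = b.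
Proof.
move=> d0 uq a b la lb E.
set j := j0 + m - a.
have Ha : h (j + a) && h (j + a).+1.
  rewrite (_ : j + a = j0 + m); last by lia.
  by rewrite hp -addSn hp.
have Hb : h (j + b) && h (j + b).+1.
  by rewrite -E -addSn -E addSn.
have := uq _ Ha; have := uq _ Hb => eb ea.
have : j + a == j + b %[mod m] by rewrite ea eb.
rewrite eqn_modDl !modn_small //; by move/eqP.
Qed.

End Cover.

Lemma one_dbl (m : nat) (P : pred 'I_m) : \sum_(j < m) (P j : nat) = 1 ->
  (exists j, P j) /\ (forall j1 j2, P j1 -> P j2 -> j1 = j2).
Proof.
move=> Hs; split.
  case: (pickP P) => [j Pj | H0]; first by exists j.
  move: Hs; rewrite big1 // => j _; by rewrite H0.
move=> j1 j2 P1 P2; apply/eqP; apply/negPn/negP => ne.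
move: Hs; rewrite (bigD1 j1) //= (bigD1 j2) /=; last by rewrite eq_sym.
rewrite P1 P2; lia.
Qed.


Section G.
Variable n : nat.
Local Notation N := n.+1.
Implicit Types D E : {set 'I_N}.

Definition gD D (k : nat) : bool := (inord (k %% N) : 'I_N) \in D.

Lemma gD_per D j : gD D (j + N) = gD D j.
Proof. by rewrite /gD modnDr. Qed.

Lemma gD_eq D a b : a = b %[mod N] -> gD D a = gD D b.
Proof. by rewrite /gD => ->. Qed.

Lemma gD_ord D (x : 'I_N) : gD D x = (x \in D).
Proof. by rewrite /gD modn_small // inord_val. Qed.

Lemma gD_setP D E : (forall k, k < N -> gD D k = gD E k) -> D = E.
Proof. move=> H; apply/setP => x; rewrite -!gD_ord; apply: H; exact: ltn_ord. Qed.

Lemma card_gD D : #|D| = \sum_(k < N) (gD D k : nat).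
Proof.
rewrite -sum1_card big_mkcond /=; apply eq_bigr => x _; rewrite gD_ord; by case: (x \in D).
Qed.

Lemma TD_g D : total_dom D -> forall k, gD D k || gD D k.+2.
Proof.
move=> /forallP H k.
have /existsP [y /andP [yD adj]] := H (inord (k.+1 %% N)).
have Hy : forall t, (y : nat) = t %% N -> gD D t.
  by move=> t Ht; rewrite /gD -Ht inord_val.
move: adj; rewrite /cycle_adj /=. rewrite inordK ?ltn_pmod // => /orP [] /eqP E.
  apply/orP; right; apply: Hy; rewrite E.
  by rewrite -[(k.+1 %% N).+1]addn1 modnDml addn1.
apply/orP; left; apply: Hy.
have : k + 1 == val y + 1 %[mod N] by rewrite !addn1 E.
by rewrite eqn_modDr (modn_small (ltn_ord y)) => /eqP.
Qed.

Lemma g_TD D : (forall k, gD D k || gD D k.+2) -> total_dom D.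
Proof.
move=> H; apply/forallP => x; have := H (x + n); case/orP => Hg; apply/existsP.
  exists (inord ((x + n) %% N)); rewrite /gD in Hg; rewrite Hg /= /cycle_adj /= inordK ?ltn_pmod //.
  apply/orP; right; rewrite -[((x + n) %% N).+1]addn1 modnDml.
  by rewrite (_ : x + n + 1 = x + N) ?modnDr ?modn_small //; lia.
exists (inord ((x + n).+2 %% N)); rewrite /gD in Hg; rewrite Hg /= /cycle_adj /= inordK ?ltn_pmod //.
apply/orP; left.
by rewrite (_ : (x + n).+2 = x.+1 + N) ?modnDr //; lia.
Qed.

Definition crot (s : nat) D := [set x : 'I_N | gD D (x + s)].

Lemma g_rot s D k : gD (crot s D) k = gD D (k + s).
Proof.
rewrite {1}/gD inE inordK ?ltn_pmod //; apply gD_eq; by rewrite modnDml.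
Qed.

Lemma rot_TD s D : total_dom D -> total_dom (crot s D).
Proof.
move=> H; apply g_TD => k; rewrite !g_rot !addSn; exact: TD_g.
Qed.

Lemma rot_card s D : #|crot s D| = #|D|.
Proof.
rewrite !card_gD; under eq_bigr do rewrite g_rot.
apply: (@sum_shift N s (fun k => (gD D k : nat))) => i; by rewrite gD_per.
Qed.

Definition cmix D E := [set x : 'I_N | if odd x then x \in E else x \in D].

Lemma g_mix D E k : ~~ odd N -> gD (cmix D E) k = if odd k then gD E k else gD D k.
Proof.
move=> ev; rewrite {1}/gD inE inordK ?ltn_pmod // odd_mod //; last by apply negbTE.
Qed.

Lemma mix_TD D E : ~~ odd N -> total_dom D -> total_dom E -> total_dom (cmix D E).
Proof.
move=> ev HD HE; apply g_TD => k; rewrite !g_mix //= negbK.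
by case: (odd k); apply TD_g.
Qed.

Definition R0 := [set x : 'I_N | x %% 4 < 2].

Lemma g_R0 k : gD R0 k = ((k %% N) %% 4 < 2).
Proof. by rewrite /gD inE inordK ?ltn_pmod. Qed.

Lemma R0_TD : 2 <= n -> total_dom R0.
Proof.
move=> n2; apply g_TD => k; rewrite !g_R0.
have lt := ltn_pmod k (ltn0Sn n).
rewrite -[k.+2]addn2 -modnDml.
set t := k %% N in lt *.
case: (ltnP (t + 2) N) => h.
  rewrite (modn_small h); lia.
case: (t =P n) => e.
  rewrite (_ : t + 2 = 1 + N); last by lia.
  rewrite modnDr (@modn_small 1); [by rewrite orbT | lia].
rewrite (_ : t + 2 = 0 + N); last by lia.
by rewrite modnDr mod0n orbT.
Qed.

Lemma R0_card : #|R0| = 2 * (N %/ 4) + minn (N %% 4) 2.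
Proof.
rewrite card_gD -sum_R0; apply eq_bigr => i _; by rewrite g_R0 (modn_small (ltn_ord i)).
Qed.

Definition gamma_c (g : nat) := forall D, total_dom D -> g <= #|D|.

Lemma gamma_char g : gamma_c g -> #|R0| = g -> total_dom R0 ->
  forall D, gamma_t_set D = total_dom D && (#|D| == g).
Proof.
move=> Hg HR TR D; rewrite /gamma_t_set; case TD: (total_dom D) => //=.
apply/idP/idP.
  move/forallP/(_ R0); rewrite TR /= HR => le; rewrite eqn_leq le /=; exact: Hg.
move/eqP => e; apply/forallP => D'; apply/implyP => T'; rewrite e; exact: Hg.
Qed.

End G.

Lemma dc (N K c : nat) (M : {set {set 'I_N}}) :
  (forall D, D \in M -> #|D| = c) ->
  (forall v, #|[set D in M | v \in D]| <= K) ->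
  N * K <= #|M| * c -> forall v, #|[set D in M | v \in D]| = K.
Proof.
move=> Hc HK Hl.
set f := fun v => #|[set D in M | v \in D]|.
have E : \sum_(v : 'I_N) f v = #|M| * c.
  have E1 : forall v, f v = \sum_(D in M) (v \in D : nat).
    move=> v; rewrite /f -sum1_card.
    rewrite big_mkcond [in RHS]big_mkcond /=; apply eq_bigr => D _; rewrite !inE.
    by case: (D \in M); case: (v \in D).
  under eq_bigr do rewrite E1.
  rewrite exchange_big /= -sum_nat_const; apply eq_bigr => D DM.
  rewrite -(Hc _ DM) -sum1_card [RHS]big_mkcond /=; apply eq_bigr => v _; by case: (v \in D).
have E2 : \sum_(v : 'I_N) (K - f v) + \sum_(v : 'I_N) f v = N * K.
  rewrite -big_split /= (eq_bigr (fun _ => K)); last by move=> v _; rewrite subnK // HK.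
  by rewrite sum_nat_const card_ord mulnC.
have E3 : \sum_(v : 'I_N) (K - f v) == 0 by rewrite E in E2; apply/eqP; lia.
move=> v; move: E3; rewrite sum_nat_eq0 => /forallP /(_ v) /eqP.
have := HK v; rewrite /f; lia.
Qed.


Lemma sum_double N (f : nat -> nat) :
  \sum_(k < N + N) f k = \sum_(k < N) f k + \sum_(k < N) f (N + k).
Proof. by rewrite big_split_ord /=. Qed.

Section OddCase.
Variable n : nat.
Local Notation N := n.+1.
Hypothesis oddN : odd N.
Hypothesis n2 : 2 <= n.
Implicit Types D E : {set 'I_N}.

Let hN2 : N %% 2 = 1.
Proof. by rewrite modn2 oddN. Qed.

Definition hd D j := gD D (2 * j).
Let e := N.+1 %/ 2.
Let h2e : 2 * e = N.+1.
Proof. rewrite /e; lia. Qed.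

Lemma hd_per D j : hd D (j + N) = hd D j.
Proof. by rewrite /hd (_ : 2 * (j + N) = 2 * j + N + N) ?gD_per //; lia. Qed.

Lemma hd_cover D : total_dom D -> forall j, hd D j || hd D j.+1.
Proof.
move=> T j; rewrite /hd (_ : 2 * j.+1 = (2 * j).+2); last by lia.
exact: TD_g.
Qed.

Lemma g_hd D x : gD D x = hd D (x * e).
Proof.
rewrite /hd mulnCA h2e mulnS.
by rewrite (per_mul (@gD_per n D)).
Qed.

Lemma card_hd D : #|D| = \sum_(j < N) (hd D j : nat).
Proof.
have S1 := sum_double N (fun k => (gD D k : nat)).
have S2 := sum_split2 N (fun k => (gD D k : nat)).
rewrite mul2n -addnn in S2.
have S3 : \sum_(k < N) (gD D (N + k) : nat) = \sum_(k < N) (gD D k : nat).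
  by apply eq_bigr => k _; rewrite addnC gD_per.
have S4 : \sum_(j < N) (gD D (2 * j + 1) : nat) = \sum_(j < N) (hd D j : nat).
  rewrite -(@sum_shift N e (fun j => (hd D j : nat))); last by move=> i; rewrite hd_per.
  apply eq_bigr => j _; rewrite /hd mulnDr h2e.
  by rewrite (_ : 2 * j + N.+1 = (2 * j + 1) + N) ?gD_per //; lia.
rewrite S3 S4 in S1 S2; rewrite card_gD.
have S5 : \sum_(j < N) (gD D (2 * j) : nat) = \sum_(j < N) (hd D j : nat) by [].
rewrite S5 in S2; lia.
Qed.

Let gam := N.+1 %/ 2.

Lemma gam_lb : gamma_c n gam.
Proof.
move=> D T; rewrite card_hd.
have := cover_sum (@hd_per D) (hd_cover T); rewrite /gam; lia.
Qed.

Lemma R0_gam : #|R0 n| = gam.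
Proof. rewrite R0_card /gam; lia. Qed.

Definition MA := [set D : {set 'I_N} | gamma_t_set D].

Lemma inMA D : (D \in MA) = total_dom D && (#|D| == gam).
Proof. by rewrite inE (gamma_char gam_lb R0_gam (R0_TD n2)). Qed.

Definition j0 D : nat := if [pick j : 'I_N | hd D j && hd D j.+1] is Some j then val j else 0.

Lemma j0_spec D : D \in MA -> [/\ j0 D < N, hd D (j0 D) && hd D (j0 D).+1 &
   forall j, j < N -> j != j0 D -> ~~ (hd D j && hd D j.+1)].
Proof.
rewrite inMA => /andP [T /eqP C].
have := cover_sum (@hd_per D) (hd_cover T); rewrite -card_hd C /gam => E.
have E1 : \sum_(j < N) (hd D j && hd D j.+1 : nat) = 1 by lia.
have [[j1 P1] U] := one_dbl E1.
rewrite /j0; case: pickP => [j Pj | H]; last by move: (H j1); rewrite P1.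
split => //= k lk; apply: contra => Pk.
by rewrite -(U (Ordinal lk) j Pk Pj).
Qed.

Lemma hd_formula D : D \in MA -> forall y, hd D y = ~~ odd ((y + (N - (j0 D).+1)) %% N).
Proof.
move=> DM; have [l d u] := j0_spec DM.
have T : total_dom D by move: DM; rewrite inMA => /andP [].
apply: (chain_formula (@hd_per D) l).
exact: (prop_chain (@hd_per D) (hd_cover T) l d u).
Qed.

Lemma detA D E : D \in MA -> E \in MA -> j0 D = j0 E -> D = E.
Proof.
move=> DM EM ej; apply gD_setP => k _.
by rewrite !g_hd (hd_formula DM) (hd_formula EM) ej.
Qed.

Lemma uniq_dblA D : D \in MA -> forall j, hd D j && hd D j.+1 -> j %% N = j0 D.
Proof.
move=> DM j dj; have [l d u] := j0_spec DM.
apply/eqP; apply/negPn/negP => ne.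
have := u _ (ltn_pmod j (ltn0Sn n)) ne.
rewrite (per_mod (@hd_per D)) (@per_eq N (hd D) (@hd_per D) (j %% N).+1 j.+1) ?dj //.
by rewrite -addn1 modnDml addn1.
Qed.

Lemma hd_rot s D j : hd (crot (2 * s) D) j = hd D (j + s).
Proof. by rewrite /hd g_rot mulnDr. Qed.

Lemma R0_MA : R0 n \in MA.
Proof. by rewrite inMA (R0_TD n2) R0_gam eqxx. Qed.

Lemma rot_MA s D : D \in MA -> crot s D \in MA.
Proof. by rewrite !inMA rot_card => /andP [T ->]; rewrite rot_TD. Qed.

Lemma MA_lb : N <= #|MA|.
Proof.
have inj : injective (fun b : 'I_N => crot (2 * b) (R0 n)).
  move=> a b /= E; apply val_inj => /=.
  have [l d u] := j0_spec R0_MA.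
  apply: (shift_inj_dbl (@hd_per (R0 n)) d (uniq_dblA R0_MA)) => //.
  by move=> j; rewrite -!hd_rot E.
rewrite -{1}(card_ord N) -(card_imset _ inj).
apply subset_leq_card; apply/subsetP => D /imsetP [b _ ->]; exact: rot_MA R0_MA.
Qed.

Lemma MA_ub (v : 'I_N) : #|[set D in MA | v \in D]| <= gam.
Proof.
set f := fun D => (inord ((v * e + (N - (j0 D).+1)) %% N) : 'I_N).
have inj : {in [set D in MA | v \in D] &, injective f}.
  move=> D E /setIdP [DM _] /setIdP [EM _] /(congr1 val).
  rewrite /f /= !inordK ?ltn_pmod // => /eqP.
  rewrite eqn_modDl !modn_small; first last.
  - have [l _ _] := j0_spec DM; lia.
  - have [l _ _] := j0_spec EM; lia.
  move=> /eqP E1; apply: detA => //.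
  have [l _ _] := j0_spec DM; have [l' _ _] := j0_spec EM; lia.
rewrite -(card_in_imset inj).
apply: (leq_trans (subset_leq_card (B := [set i : 'I_N | ~~ odd i]) _)).
  apply/subsetP => i /imsetP [D /setIdP [DM vD] ->].
  rewrite inE /f inordK ?ltn_pmod // -hd_formula // -g_hd gD_ord //.
by rewrite card_set_sum sum_even /gam addn1.
Qed.

Lemma TDV_odd (v : 'I_N) : TDV v = N.+1 %/ 2.
Proof.
have -> : TDV v = #|[set D in MA | v \in D]|.
  rewrite /TDV; apply: eq_card => D; by rewrite !inE.
apply: (dc (c := gam)) => //.
- by move=> D; rewrite inMA => /andP [_ /eqP].
- exact: MA_ub.
- by rewrite leq_mul2r MA_lb orbT.
Qed.

End OddCase.


Lemma alt_lemma (h : nat -> bool) : (forall j, h j.+1 = ~~ h j) -> forall j, h j = h 0 (+) odd j.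
Proof.
move=> H; elim=> [|j IH]; first by rewrite addbF.
by rewrite H IH /= addbN.
Qed.

Lemma odd2c j c : odd (2 * j + c) = odd c.
Proof. by rewrite oddD oddM /=. Qed.

Section EvenCase.
Variables n m : nat.
Local Notation N := n.+1.
Hypothesis hNm : N = 2 * m.
Hypothesis n2 : 2 <= n.
Implicit Types D E : {set 'I_N}.

Let evN : ~~ odd N.
Proof. by rewrite hNm oddM. Qed.

Let m_gt0 : 0 < m.
Proof. lia. Qed.

Definition ch D (c j : nat) := gD D (2 * j + c).

Lemma ch_per D c j : ch D c (j + m) = ch D c j.
Proof. by rewrite /ch (_ : 2 * (j + m) + c = 2 * j + c + N) ?gD_per //; lia. Qed.

Lemma ch_cover D c : total_dom D -> forall j, ch D c j || ch D c j.+1.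
Proof.
move=> T j; rewrite /ch (_ : 2 * j.+1 + c = (2 * j + c).+2); last by lia.
exact: TD_g.
Qed.

Definition sc D c := \sum_(j < m) (ch D c j : nat).

Lemma card_ch D : #|D| = sc D 0 + sc D 1.
Proof.
have S := sum_split2 m (fun k => (gD D k : nat)); rewrite -hNm in S.
by rewrite card_gD S /sc; congr (_ + _); apply eq_bigr => j _; rewrite /ch ?addn0.
Qed.

Lemma sc_cover D c : total_dom D ->
  sc D c * 2 = m + \sum_(j < m) (ch D c j && ch D c j.+1 : nat).
Proof. move=> T; exact: (cover_sum (@ch_per D c) (ch_cover c T)). Qed.

Let gam := 2 * (m.+1 %/ 2).

Lemma gamE_lb : gamma_c n gam.
Proof.
move=> D T; rewrite card_ch.
have := sc_cover 0 T; have := sc_cover 1 T; rewrite /gam; lia.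
Qed.

Lemma R0E_gam : #|R0 n| = gam.
Proof. rewrite R0_card hNm /gam; lia. Qed.

Definition ME := [set D : {set 'I_N} | gamma_t_set D].

Lemma inME D : (D \in ME) = total_dom D && (#|D| == gam).
Proof. by rewrite inE (gamma_char gamE_lb R0E_gam (R0_TD n2)). Qed.

Lemma sc_ME D c : c < 2 -> D \in ME -> sc D c = m.+1 %/ 2 /\
  \sum_(j < m) (ch D c j && ch D c j.+1 : nat) = 2 * (m.+1 %/ 2) - m.
Proof.
move=> c2; rewrite inME => /andP [T /eqP C]; move: C; rewrite card_ch /gam => C.
have := sc_cover 0 T; have := sc_cover 1 T.
case: c c2 => [|[|c]] // _; lia.
Qed.

Lemma ch_rot s D c j : ch (crot (2 * s) D) c j = ch D c (j + s).
Proof. by rewrite /ch g_rot; congr gD; lia. Qed.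

Lemma ch_mix0 D E j : ch (cmix D E) 0 j = ch D 0 j.
Proof. by rewrite /ch g_mix // odd2c. Qed.

Lemma ch_mix1 D E j : ch (cmix D E) 1 j = ch E 1 j.
Proof. by rewrite /ch g_mix // odd2c. Qed.

Lemma rot_ME s D : D \in ME -> crot s D \in ME.
Proof. by rewrite !inME rot_card => /andP [T ->]; rewrite rot_TD. Qed.

Lemma mix_ME D E : D \in ME -> E \in ME -> cmix D E \in ME.
Proof.
move=> DM EM; have := DM; have := EM; rewrite !inME => /andP [TE _] /andP [TD _].
rewrite mix_TD //= card_ch.
have -> : sc (cmix D E) 0 = sc D 0 by apply eq_bigr => j _; rewrite ch_mix0.
have -> : sc (cmix D E) 1 = sc E 1 by apply eq_bigr => j _; rewrite ch_mix1.
have [-> _] := sc_ME (isT : 0 < 2) DM; have [-> _] := sc_ME (isT : 1 < 2) EM.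
by rewrite /gam mul2n addnn.
Qed.

Lemma R0_ME : R0 n \in ME.
Proof. by rewrite inME (R0_TD n2) R0E_gam eqxx. Qed.

Lemma g_ch D k : gD D k = ch D (k %% 2) (k %/ 2).
Proof. by rewrite /ch mulnC -divn_eq. Qed.

Lemma det_ch D E : (forall j, ch D 0 j = ch E 0 j) -> (forall j, ch D 1 j = ch E 1 j) -> D = E.
Proof.
move=> H0 H1; apply gD_setP => k _; rewrite !g_ch.
have := modn2 k; case: (odd k) => /= ->; [exact: H1 | exact: H0].
Qed.

Lemma TDV_ME (v : 'I_N) : TDV v = #|[set D in ME | v \in D]|.
Proof. rewrite /TDV; apply: eq_card => D; by rewrite !inE. Qed.

Section MEven.
Hypothesis evm : ~~ odd m.
Let hm2 : m %% 2 = 0.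
Proof. by rewrite modn2 (negbTE evm). Qed.

Lemma no_dbl D c : D \in ME -> c < 2 -> forall j, ch D c j.+1 = ~~ ch D c j.
Proof.
move=> DM c2 j.
have [_ S] := sc_ME c2 DM.
have S0 : \sum_(j < m) (ch D c j && ch D c j.+1 : nat) == 0.
  rewrite S; apply/eqP; lia.
have nd : forall j, j < m -> ~~ (ch D c j && ch D c j.+1).
  move=> i li; move: S0; rewrite sum_nat_eq0 => /forallP /(_ (Ordinal li)) /=.
  by case: (_ && _).
have T : total_dom D by move: DM; rewrite inME => /andP [].
have := ch_cover c T j.
have := nd _ (ltn_pmod j m_gt0).
rewrite (per_mod (@ch_per D c)).
rewrite (@per_eq m (ch D c) (@ch_per D c) (j %% m).+1 j.+1); last by rewrite -addn1 modnDml addn1.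
by case: (ch D c j); case: (ch D c j.+1).
Qed.

Lemma ch_alt D c : D \in ME -> c < 2 -> forall j, ch D c j = ch D c 0 (+) odd j.
Proof. move=> DM c2; apply: alt_lemma; exact: no_dbl. Qed.

Lemma detB D E : D \in ME -> E \in ME -> ch D 0 0 = ch E 0 0 -> ch D 1 0 = ch E 1 0 -> D = E.
Proof.
move=> DM EM e0 e1; apply det_ch => j.
  by rewrite (ch_alt DM) // (ch_alt EM (c := 0)) // e0.
by rewrite (ch_alt DM) // (ch_alt EM (c := 1)) // e1.
Qed.

Lemma MB_ub (v : 'I_N) : #|[set D in ME | v \in D]| <= 2.
Proof.
set c := v %% 2.
have c2 : c < 2 by rewrite /c ltn_pmod.
set f := fun D => ch D (1 - c) 0.
have key : forall D, D \in ME -> v \in D -> ch D c 0 = ~~ odd (v %/ 2).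
  move=> D DM vD; move: vD; rewrite -gD_ord g_ch -/c (ch_alt DM) //.
  by case: (ch D c 0); case: (odd _).
have inj : {in [set D in ME | v \in D] &, injective f}.
  move=> D E /setIdP [DM vD] /setIdP [EM vE] ef.
  have ec := key _ DM vD; rewrite -(key _ EM vE) in ec.
  rewrite /f in ef; apply: detB => //.
    by case: (c) c2 ec ef => [|[|]] //.
  by case: (c) c2 ec ef => [|[|]] //.
by have := @leq_card_in _ _ f _ inj; rewrite card_bool.
Qed.

Lemma MB_lb : 4 <= #|ME|.
Proof.
set F := fun p : bool * bool => cmix (crot (2 * p.1) (R0 n)) (crot (2 * p.2) (R0 n)).
have a1 : forall c, c < 2 -> ch (R0 n) c 1 = ~~ ch (R0 n) c 0.
  by move=> c c2; rewrite (ch_alt R0_ME c2 1) /= addbT.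
have inj : injective F.
  move=> [a b] [a' b'] /= E.
  have E0 := congr1 (fun D => ch D 0 0) E; have E1 := congr1 (fun D => ch D 1 0) E.
  rewrite /= !ch_mix0 !ch_rot !add0n in E0.
  rewrite /= !ch_mix1 !ch_rot !add0n in E1.
  have a2 : forall c (a a' : bool), c < 2 -> ch (R0 n) c a = ch (R0 n) c a' -> a = a'.
    move=> c [] [] c2 //= /esym; rewrite a1 //; by case: (ch _ _ 0).
  by move: (a2 0 _ _ isT E0) (a2 1 _ _ isT E1) => /= -> ->.
have := card_imset (mem [set: bool * bool]) inj.
rewrite cardsT card_prod card_bool => E4; rewrite (_ : 4 = 2 * 2) // -E4.
apply subset_leq_card; apply/subsetP => D /imsetP [p _ ->].
by apply: mix_ME; apply: rot_ME; exact: R0_ME.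
Qed.

Lemma TDV_m_even (v : 'I_N) : TDV v = 2.
Proof.
rewrite TDV_ME; apply: (dc (c := gam)) => //.
- by move=> D; rewrite inME => /andP [_ /eqP].
- exact: MB_ub.
- rewrite (_ : N * 2 = 4 * m); last by lia.
  rewrite (_ : gam = m); last by rewrite /gam; lia.
  by rewrite leq_mul2r MB_lb orbT.
Qed.

End MEven.

Section MOdd.
Hypothesis oddm : odd m.
Let hm2 : m %% 2 = 1.
Proof. by rewrite modn2 oddm. Qed.

Definition jc D c : nat := if [pick j : 'I_m | ch D c j && ch D c j.+1] is Some j then val j else 0.

Lemma jc_spec D c : D \in ME -> c < 2 -> [/\ jc D c < m, ch D c (jc D c) && ch D c (jc D c).+1 &
   forall j, j < m -> j != jc D c -> ~~ (ch D c j && ch D c j.+1)].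
Proof.
move=> DM c2; have [_ S] := sc_ME c2 DM.
have E1 : \sum_(j < m) (ch D c j && ch D c j.+1 : nat) = 1 by rewrite S; lia.
have [[j1 P1] U] := one_dbl E1.
rewrite /jc; case: pickP => [j Pj | H]; last by move: (H j1); rewrite P1.
split => //= k lk; apply: contra => Pk.
by rewrite -(U (Ordinal lk) j Pk Pj).
Qed.

Lemma ch_formula D c : D \in ME -> c < 2 -> forall y, ch D c y = ~~ odd ((y + (m - (jc D c).+1)) %% m).
Proof.
move=> DM c2; have [l d u] := jc_spec DM c2.
have T : total_dom D by move: DM; rewrite inME => /andP [].
apply: (chain_formula (@ch_per D c) l).
exact: (prop_chain (@ch_per D c) (ch_cover c T) l d u).
Qed.

Lemma detC D E : D \in ME -> E \in ME -> jc D 0 = jc E 0 -> jc D 1 = jc E 1 -> D = E.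
Proof.
move=> DM EM e0 e1; apply det_ch => j.
  by rewrite (ch_formula DM) // (ch_formula EM) // e0.
by rewrite (ch_formula DM) // (ch_formula EM) // e1.
Qed.

Lemma uniq_dblC D c : D \in ME -> c < 2 -> forall j, ch D c j && ch D c j.+1 -> j %% m = jc D c.
Proof.
move=> DM c2 j dj; have [l d u] := jc_spec DM c2.
apply/eqP; apply/negPn/negP => ne.
have := u _ (ltn_pmod j m_gt0) ne.
rewrite (per_mod (@ch_per D c)) (@per_eq m (ch D c) (@ch_per D c) (j %% m).+1 j.+1) ?dj //.
by rewrite -addn1 modnDml addn1.
Qed.

Definition om (k : nat) : 'I_m := Ordinal (ltn_pmod k m_gt0).

Lemma MC_ub (v : 'I_N) : #|[set D in ME | v \in D]| <= m.+1 %/ 2 * m.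
Proof.
set c := v %% 2; set w := v %/ 2.
have c2 : c < 2 by rewrite /c ltn_pmod.
set f := fun D => (om (w + (m - (jc D c).+1)), om (jc D (1 - c))).
have inj : {in [set D in ME | v \in D] &, injective f}.
  move=> D E /setIdP [DM _] /setIdP [EM _] /= ef.
  have [ef1 ef2] : om (w + (m - (jc D c).+1)) = om (w + (m - (jc E c).+1)) /\
                   om (jc D (1 - c)) = om (jc E (1 - c)).
    by split; [exact: (congr1 fst ef) | exact: (congr1 snd ef)].
  have c2' : 1 - c < 2 by lia.
  have h0 : (w + (m - (jc D c).+1)) %% m = (w + (m - (jc E c).+1)) %% m.
    by move: ef1 => /(congr1 val).
  move: h0 => /eqP; rewrite eqn_modDl !modn_small; first last.
  - have [l _ _] := jc_spec DM c2; lia.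
  - have [l _ _] := jc_spec EM c2; lia.
  move=> /eqP h1.
  have h1' : jc D c = jc E c.
    have [l _ _] := jc_spec DM c2; have [l' _ _] := jc_spec EM c2; lia.
  have h3 : jc D (1 - c) %% m = jc E (1 - c) %% m by move: ef2 => /(congr1 val).
  move: h3; rewrite !modn_small; first last.
  - by case: (jc_spec DM c2').
  - by case: (jc_spec EM c2').
  move=> h2; apply: detC => //.
    by case: (c) c2 h1' h2 => [|[|]].
  by case: (c) c2 h1' h2 => [|[|]].
rewrite -(card_in_imset inj).
apply: (leq_trans (subset_leq_card (B := setX [set i : 'I_m | ~~ odd i] [set: 'I_m]) _)).
  apply/subsetP => p /imsetP [D /setIdP [DM vD] ->].
  rewrite !inE andbT /= -ch_formula //.
  by move: vD; rewrite -gD_ord g_ch.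
by rewrite cardsX cardsT card_ord card_set_sum sum_even addn1.
Qed.

Lemma MC_lb : m * m <= #|ME|.
Proof.
set F := fun p : 'I_m * 'I_m => cmix (crot (2 * p.1) (R0 n)) (crot (2 * p.2) (R0 n)).
have a2 : forall c (a a' : 'I_m), c < 2 -> (forall j, ch (crot (2 * a) (R0 n)) c j = ch (crot (2 * a') (R0 n)) c j) -> a = a'.
  move=> c a a' c2 H; apply val_inj => /=.
  have [l d u] := jc_spec R0_ME c2.
  apply: (shift_inj_dbl (@ch_per (R0 n) c) d (uniq_dblC R0_ME c2)) => //.
  by move=> j; rewrite -!ch_rot H.
have inj : injective F.
  move=> [a b] [a' b'] /= E.
  have E0 := congr1 (fun D => ch D 0) E; have E1 := congr1 (fun D => ch D 1) E.
  simpl in E0, E1.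
  have ea : a = a'.
    apply: (a2 0) => // j; move: (congr1 (fun g => g j) E0) => /=; by rewrite !ch_mix0.
  have eb : b = b'.
    apply: (a2 1) => // j; move: (congr1 (fun g => g j) E1) => /=; by rewrite !ch_mix1.
  by rewrite ea eb.
have := card_imset (mem [set: 'I_m * 'I_m]) inj.
rewrite cardsT card_prod card_ord => <-.
apply subset_leq_card; apply/subsetP => D /imsetP [p _ ->].
by apply: mix_ME; apply: rot_ME; exact: R0_ME.
Qed.

Lemma TDV_m_odd (v : 'I_N) : TDV v = m.+1 %/ 2 * m.
Proof.
rewrite TDV_ME; apply: (dc (c := gam)) => //.
- by move=> D; rewrite inME => /andP [_ /eqP].
- exact: MC_ub.
- rewrite (_ : N * (m.+1 %/ 2 * m) = m * m * gam); last first.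
    rewrite hNm /gam; nia.
  by rewrite leq_mul2r MC_lb orbT.
Qed.

End MOdd.
End EvenCase.


Theorem corollary4p2 (n : nat) (v : 'I_n) : 3 <= n ->
  TDV v = (if n %% 4 == 0 then 2
           else if n %% 4 == 2 then (n %/ 2) * ((n + 2) %/ 4)
           else n %/ 2 + 1).
Proof.
case: n v => [|n] v // H3.
have n2 : 2 <= n by lia.
case: (boolP (odd n.+1)) => oN.
  have h : n.+1 %% 2 = 1 by rewrite modn2 oN.
  rewrite (TDV_odd oN n2 v).
  case: ifP => /eqP h4; first lia.
  case: ifP => /eqP h4'; first lia.
  lia.
have h : n.+1 %% 2 = 0 by rewrite modn2 (negbTE oN).
set m := n.+1 %/ 2.
have hNm : n.+1 = 2 * m by rewrite /m; lia.
case: (boolP (odd m)) => om.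
  have hm : m %% 2 = 1 by rewrite modn2 om.
  rewrite (TDV_m_odd hNm n2 om v).
  case: ifP => /eqP h4; first lia.
  case: ifP => /eqP h4'; last lia.

  have e2 : (n.+1 + 2) %/ 4 = m.+1 %/ 2 by lia.
  by rewrite e2 mulnC.
have hm : m %% 2 = 0 by rewrite modn2 (negbTE om).
rewrite (TDV_m_even hNm n2 om v).
case: ifP => /eqP h4 //; lia.
Qed.
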